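(* Let $(V,g)$ be a Euclidean vector space and $\mathfrak{g}\subseteq\mathfrak{so}(V)$ a Lie subalgebra. Suppose there exists $T\in\Lambda^3V$ which is $\mathfrak{g}$-invariant, non-degenerate (i.e. $X\lrcorner T=0$ implies $X=0$) and satisfies $X\lrcorner T\in\mathfrak{g}^{\perp}$ for all $X\in V$. Then $\mathrm{Ric}(R)=0$ for every $R\in\mathcal{K}(\mathfrak{g},V)$.
   Context: $\Lambda^2V$ is identified with $\mathfrak{so}(V)$ via $F\mapsto g(F\cdot,\cdot)$; $\mathfrak{g}^\perp$ is the orthogonal complement of $\mathfrak{g}$ in $\Lambda^2V$. $\mathcal{K}(\mathfrak{g},V)$ is the space of algebraic curvature tensors with values in $\mathfrak{g}$: $R\in\Lambda^2V\otimes\Lambda^2V$ with $R(X,Y)\in\mathfrak{g}$ for all $X,Y$ and satisfying the first Bianchi identity $\sum_i e_i\wedge R(e_i,X)=0$ for all $X$ (equivalently, $R$ is symmetric in the two pairs and its total alternation in $\Lambda^4V$ vanishes). The Ricci contraction is $\mathrm{Ric}(R)(X,Y)=\sum_iR(X,e_i,Y,e_i)$ for an orthonormal basis $\{e_i\}$. *)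

(* Defs.v *)
(* V = R^n (column vectors 'cV[R]_n) with the standard
   Euclidean inner product; {e_i} the standard orthonormal basis.
   R is any real field (the statement is purely algebraic). *)
From HB Require Import structures.
From mathcomp Require Import all_boot all_order all_algebra.
Set Implicit Arguments. Unset Strict Implicit. Unset Printing Implicit Defensive.
Import Order.TTheory GRing.Theory Num.Theory.
Local Open Scope ring_scope.

Section Defs.
Variables (R : realFieldType) (n : nat).

(* Multilinear forms in coordinates w.r.t. the orthonormal basis e_i. *)
Definition form2 := 'I_n -> 'I_n -> R.
Definition form3 := 'I_n -> 'I_n -> 'I_n -> R.
Definition form4 := 'I_n -> 'I_n -> 'I_n -> 'I_n -> R.

(* so(V): a matrix A acts on column vectors, X |-> A *m X. *)
Definition skew (A : 'M[R]_n) : Prop := A^T = - A.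

(* The identification Lambda^2 V = so(V), F |-> g(F.,.):
   the 2-form w corresponds to the endomorphism A with g(A Y, Z) = w(Y,Z),
   i.e. A k j = w j k. *)
Definition endo_of_form2 (w : form2) : 'M[R]_n := \matrix_(k, j) w j k.

Definition lie_subalgebra (g : 'M[R]_n -> Prop) : Prop :=
  [/\ g 0,
      forall (a : R) A B, g A -> g B -> g (a *: A + B),
      forall A B, g A -> g B -> g (A *m B - B *m A)
    & forall A, g A -> skew A].

(* inner product on Lambda^2 V = so(V) (a positive multiple of the induced
   one; orthogonal complements do not depend on the factor). *)
Definition ip2 (A B : 'M[R]_n) : R := \sum_(i < n) \sum_(j < n) A i j * B i j.

Definition perp (g : 'M[R]_n -> Prop) (A : 'M[R]_n) : Prop :=
  skew A /\ forall B, g B -> ip2 A B = 0.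

Definition alt3 (T : form3) : Prop :=
  (forall i j k, T i j k = - T j i k) /\ (forall i j k, T i j k = - T i k j).

Definition contr (X : 'cV[R]_n) (T : form3) : 'M[R]_n :=
  endo_of_form2 (fun j k => \sum_(i < n) X i 0 * T i j k).

Definition act3 (A : 'M[R]_n) (T : form3) : form3 :=
  fun i j k => - \sum_(l < n) (A l i * T l j k + A l j * T i l k + A l k * T i j l).

Definition invariant3 (g : 'M[R]_n -> Prop) (T : form3) : Prop :=
  forall A, g A -> forall i j k, act3 A T i j k = 0.

Definition nondegenerate3 (T : form3) : Prop :=
  forall X : 'cV[R]_n, contr X T = 0 -> X = 0.

Definition curv_at (Rc : form4) (X Y : 'cV[R]_n) : form2 :=
  fun k l => \sum_(i < n) \sum_(j < n) X i 0 * Y j 0 * Rc i j k l.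

Definition in_L2L2 (Rc : form4) : Prop :=
  (forall i j k l, Rc i j k l = - Rc j i k l) /\
  (forall i j k l, Rc i j k l = - Rc i j l k).

(* e_a /\ w, for a 2-form w *)
Definition wedge12 (a : 'I_n) (w : form2) : form3 :=
  fun p q r => (p == a)%:R * w q r - (q == a)%:R * w p r + (r == a)%:R * w p q.

(* first Bianchi identity: sum_i e_i /\ R(e_i, X) = 0 for all X *)
Definition bianchi (Rc : form4) : Prop :=
  forall X : 'cV[R]_n, forall p q r,
    \sum_(i < n) wedge12 i (curv_at Rc (delta_mx i 0) X) p q r = 0.

Definition curvature_tensor (g : 'M[R]_n -> Prop) (Rc : form4) : Prop :=
  [/\ in_L2L2 Rc,
      forall X Y : 'cV[R]_n, g (endo_of_form2 (curv_at Rc X Y))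
    & bianchi Rc].

Definition ricci (Rc : form4) (X Y : 'cV[R]_n) : R :=
  \sum_(i < n) \sum_(a < n) \sum_(b < n) X a 0 * Y b 0 * Rc a i b i.

End Defs.

(* Main.v *)
Require Import Defs.
From HB Require Import structures.
From mathcomp Require Import all_boot all_order all_algebra.
Import Order.TTheory GRing.Theory Num.Theory.
Local Open Scope ring_scope.

Lemma sum_delta (R : pzRingType) n (p : 'I_n) (F : 'I_n -> R) :
  \sum_(i < n) (i == p)%:R * F i = F p.
Proof.
rewrite (bigD1 p) //= eqxx mul1r big1 ?addr0 // => i ne.
by rewrite (negbTE ne) mul0r.
Qed.

Lemma sum_deltaC (R : pzRingType) n (p : 'I_n) (F : 'I_n -> R) :
  \sum_(i < n) (p == i)%:R * F i = F p.
Proof. by rewrite -(@sum_delta _ _ p F); apply: eq_bigr => i _; rewrite eq_sym. Qed.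

Lemma curv_delta (R : realFieldType) n (Rc : form4 R n) a b k l :
  curv_at Rc (delta_mx a 0) (delta_mx b 0) k l = Rc a b k l.
Proof.
rewrite /curv_at.
transitivity (\sum_(i < n) (i == a)%:R * \sum_(j < n) (j == b)%:R * Rc i j k l).
  apply: eq_bigr => i _; rewrite mulr_sumr; apply: eq_bigr => j _.
  by rewrite !mxE !eqxx !andbT mulrA.
rewrite sum_delta; exact: sum_delta.
Qed.

Lemma contr_delta (R : realFieldType) n (T : form3 R n) z i j :
  contr (delta_mx z 0) T i j = T z j i.
Proof.
rewrite /contr /endo_of_form2 mxE -(@sum_delta _ _ z (fun m => T m j i)).
by apply: eq_bigr => m _; rewrite !mxE eqxx andbT.
Qed.

Section Main.
Variables (R : realFieldType) (n : nat) (g : 'M[R]_n -> Prop) (T : form3 R n)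
  (Rc : form4 R n).
Hypotheses (HT : alt3 T) (Hinv : invariant3 g T) (Hnd : nondegenerate3 T)
  (Hperp : forall X : 'cV[R]_n, perp g (contr X T))
  (HR : curvature_tensor g Rc).

Lemma bianchi_idx p b q r : Rc p b q r - Rc q b p r + Rc r b p q = 0.
Proof.
case: HR => _ _ Hb; have := Hb (delta_mx b 0) p q r.
by rewrite /wedge12 big_split big_split /= sumrN !sum_deltaC !curv_delta.
Qed.

Lemma perp_idx a b z : \sum_(i < n) \sum_(j < n) Rc a b i j * T z i j = 0.
Proof.
case: HR => _ Hg _; case: (Hperp (delta_mx z 0)) => _ /(_ _ (Hg (delta_mx a 0) (delta_mx b 0))).
move=> H; apply: (etrans _ H); rewrite /ip2 [RHS]exchange_big /=; apply: eq_bigr => i _; apply: eq_bigr => j _.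
by rewrite contr_delta /endo_of_form2 mxE curv_delta mulrC.
Qed.

Lemma inv_idx a b i j k : \sum_(l < n) (Rc a b i l * T l j k + Rc a b j l * T i l k
  + Rc a b k l * T i j l) = 0.
Proof.
case: HR => _ Hg _; have := Hinv _ (Hg (delta_mx a 0) (delta_mx b 0)) i j k.
rewrite /act3 => /eqP; rewrite oppr_eq0 => /eqP H; apply: (etrans _ H).
by apply: eq_bigr => l _; rewrite /endo_of_form2 !mxE !curv_delta.
Qed.

Lemma S2_0 b j k : \sum_(i < n) \sum_(l < n) Rc i b j l * T i l k = 0.
Proof.
set S := LHS.
have E : S + S = \sum_(i < n) \sum_(l < n) Rc j b i l * T k i l.
  rewrite {2}/S exchange_big /= -big_split /=; apply: eq_bigr => i _.
  rewrite -big_split /=; apply: eq_bigr => l _.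
  have := bianchi_idx i b j l; case: HT => T1 T2; case: HR => [[R1 R2] _ _] H.
  rewrite (T1 l i k) (T1 k i l) (T2 i k l) opprK mulrN -mulrBl (R2 l b j i) opprK.
  congr (_ * _); apply/eqP; rewrite -subr_eq0 -H; apply/eqP.
  by rewrite addrAC.
have P : \sum_(i < n) \sum_(l < n) Rc j b i l * T k i l = 0 by apply: perp_idx.
rewrite P in E; have : S *+ 2 == 0 by rewrite mulr2n E.
by rewrite mulrn_eq0 => /eqP.
Qed.


Lemma ric0 b l : \sum_(i < n) Rc i b i l = 0.
Proof.
case: HT => T1 T2.
have H : forall j k, \sum_(m < n) (\sum_(i < n) Rc i b i m) * T m j k = 0.
  move=> j k.
  have E0 : \sum_(i < n) \sum_(m < n) (Rc i b i m * T m j k + Rc i b j m * T i m k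
     + Rc i b k m * T i j m) = 0 by apply: big1 => i _; apply: inv_idx.
  have C : \sum_(i < n) \sum_(m < n) Rc i b k m * T i j m = 0.
    transitivity (- \sum_(i < n) \sum_(m < n) Rc i b k m * T i m j);
      last by rewrite S2_0 oppr0.
    rewrite -sumrN; apply: eq_bigr => i _; rewrite -sumrN; apply: eq_bigr => m _.
    by rewrite (T2 i j m) mulrN.
  move: E0; under eq_bigr => i _ do rewrite big_split big_split /=.
  rewrite big_split big_split /= C S2_0 !addr0 => E0; apply: etrans _ E0.
  rewrite exchange_big /=; apply: eq_bigr => m _; by rewrite mulr_suml.
pose X : 'cV[R]_n := \col_m (\sum_(i < n) Rc i b i m).
have HX : contr X T = 0.
  apply/matrixP => p q; rewrite /contr /endo_of_form2 !mxE.
  under eq_bigr => m _ do rewrite mxE.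
  exact: H.
have := congr1 (fun M : 'cV[R]_n => M l 0) (Hnd _ HX).
by rewrite !mxE.
Qed.

Lemma ricci0 X Y : ricci Rc X Y = 0.
Proof.
case: HR => [[R1 R2] _ _].
rewrite /ricci exchange_big /=; apply: big1 => a _; rewrite exchange_big /=.
apply: big1 => c _; rewrite -mulr_sumr.
transitivity (X a 0 * Y c 0 * \sum_(i < n) Rc i a i c); last by rewrite ric0 mulr0.
by congr (_ * _); apply: eq_bigr => i _; rewrite (R1 a i c i) (R2 i a c i) opprK.
Qed.
End Main.

Theorem proposition2p4 (R : realFieldType) (n : nat)
    (g : 'M[R]_n -> Prop) (T : form3 R n) :
  lie_subalgebra g ->
  alt3 T ->
  invariant3 g T ->
  nondegenerate3 T ->
  (forall X : 'cV[R]_n, perp g (contr X T)) ->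
  forall Rc : form4 R n, curvature_tensor g Rc ->
  forall X Y : 'cV[R]_n, ricci Rc X Y = 0.
Proof.
move=> _ HT Hinv Hnd Hperp Rc HR X Y.
exact: (@ricci0 R n g T Rc HT Hinv Hnd Hperp HR X Y).
Qed.
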